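(* In the setting below, the bi-orthogonal polynomials satisfy the recursion relations $$A\widehat p^{(1)}=z^aB\widehat p^{(1)},\qquad B^Th^{-1}p^{(2)}=z^bA^Th^{-1}p^{(2)} .$$
   Context: Let $a,b\geq1$ and let $\mu=(\mu_{ij})_{i,j\ge0}$ be a semi-infinite complex matrix with $\mu_{i+a,j+b}=\mu_{ij}$; set $\widehat\mu_{ij}=\mu_{i,j+b}$, and define bilinear forms on $\mathbb C[z]$ by $\langle z^i,z^j\rangle_\mu=\mu_{ij}$, $\langle z^i,z^j\rangle_{\widehat\mu}=\widehat\mu_{ij}$. Let $p^{(1)}_j,p^{(2)}_j,\widehat p^{(1)}_j,\widehat p^{(2)}_j$ ($j\ge0$) be monic polynomials of degree $j$ with $\langle p^{(1)}_i,p^{(2)}_j\rangle_\mu=\delta_{ij}h_i$, $\langle \widehat p^{(1)}_i,\widehat p^{(2)}_j\rangle_{\widehat\mu}=\delta_{ij}\widehat h_i$ (all $h_i,\widehat h_i\neq0$). Let $S_1,S_2$ be semi-infinite matrices with $p^{(1)}_i(z)=\sum_{k=0}^i(S_1)_{ik}z^k$, $p^{(2)}_i(z)=h_i\sum_{k=0}^i(S_2^{-1})_{ki}z^k$, and $\widehat S_1,\widehat S_2$ defined analogously from $\widehat p^{(1)},\widehat p^{(2)},\widehat h$. Here $\Lambda$ is the semi-infinite matrix $\Lambda_{ij}=\delta_{i+1,j}$ and $\Lambda^{-1}$ its transpose. Assume $S_1\Lambda^a\widehat S_1^{-1}=S_2\widehat S_2^{-1}=:A$ and $S_1\widehat S_1^{-1}=S_2\Lambda^{-b}\widehat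 S_2^{-1}=:B$. $p^{(i)}$, $\widehat p^{(i)}$ denote the column vectors with $j$-th entries $p^{(i)}_j$, $\widehat p^{(i)}_j$; $h=\mathrm{diag}(h_j)$; ${}^T$ is transpose. *)

(* Defs.v *)
From HB Require Import structures.
From mathcomp Require Import all_boot all_order all_algebra.
From mathcomp Require Import boolp classical_sets fsbigop reals.
From mathcomp Require Import complex.
Set Implicit Arguments. Unset Strict Implicit. Unset Printing Implicit Defensive.
Import Order.TTheory GRing.Theory Num.Theory.
Local Open Scope ring_scope.
Local Open Scope classical_set_scope.

Section SemiInfinite.
Variable C : fieldType.

Definition smx := nat -> nat -> C.

(* product of semi-infinite matrices: (A B)_{ij} = sum_k A_{ik} B_{kj};
   this is a finite-support sum (all products occurring below only involve
   finitely many nonzero terms). *)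
Definition smul (A B : smx) : smx :=
  fun i j => \sum_(k \in [set: nat]) A i k * B k j.

Definition sid : smx := fun i j => (i == j)%:R.

Definition strT (A : smx) : smx := fun i j => A j i.

Definition spow (A : smx) (n : nat) : smx := iter n (smul A) sid.

(* shift matrix Lambda_{ij} = delta_{i+1,j}; Lambda^{-1} is its transpose *)
Definition sLam : smx := fun i j => (i.+1 == j)%:R.

Definition lower_tri (A : smx) := forall i j, (i < j)%N -> A i j = 0.
Definition upper_tri (A : smx) := forall i j, (j < i)%N -> A i j = 0.

Definition smulv (A : smx) (v : nat -> {poly C}) : nat -> {poly C} :=
  fun i => \sum_(j \in [set: nat]) (A i j *: v j).

Definition bform (mu : smx) (p q : {poly C}) : C :=
  \sum_(i < size p) \sum_(j < size q) p`_i * q`_j * mu i j.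

Definition monic_deg (p : {poly C}) (j : nat) := p \is monic /\ size p = j.+1.

Definition S1_of (p1 : nat -> {poly C}) : smx := fun i k => (p1 i)`_k.

(* S_2^{-1} from p^(2), h: p^(2)_i = h_i sum_k (S_2^{-1})_{ki} z^k *)
Definition S2inv_of (p2 : nat -> {poly C}) (h : nat -> C) : smx :=
  fun k i => (p2 i)`_k / h i.

End SemiInfinite.

(* Main.v *)
Require Import Defs.
From HB Require Import structures.
From mathcomp Require Import all_boot all_order all_algebra.
From mathcomp Require Import zify.
From mathcomp Require Import complex.
From mathcomp Require Import boolp classical_sets fsbigop reals.
Import Order.TTheory GRing.Theory Num.Theory.
Local Open Scope ring_scope.
Local Open Scope classical_set_scope.

Lemma fsum_bound (V : nmodType) (F : nat -> V) N :
  (forall k, (N <= k)%N -> F k = 0) ->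
  \sum_(k \in [set: nat]) F k = \sum_(k < N) F k.
Proof.
move=> HF; rewrite fsbig_ord (fsbig_widen `I_N setT) //.
move=> x [_ /=]; rewrite /preimage /=. move=> H; apply: HF.
by rewrite leqNgt; apply/negP.
Qed.

Lemma fsum_single (V : nmodType) (F : nat -> V) k0 :
  (forall k, k != k0 -> F k = 0) ->
  \sum_(k \in [set: nat]) F k = F k0.
Proof.
move=> HF; rewrite (@fsum_bound _ _ k0.+1); last first.
  by move=> k hk; apply: HF; rewrite neq_ltn ltnNge hk orbT.
rewrite big_ord_recr /= big1 ?add0r // => i _; apply: HF.
by rewrite neq_ltn ltn_ord.
Qed.

Lemma poly_expand (C : nzRingType) (p : {poly C}) N : (size p <= N)%N ->
  p = \sum_(l < N) p`_l *: 'X^l.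
Proof.
move=> hs; apply/polyP => m; rewrite coef_sum.
under eq_bigr do rewrite coefZ coefXn.
case: (ltnP m N) => hm.
  rewrite (bigD1 (Ordinal hm)) //= eqxx mulr1 big1 ?addr0 // => l hl.
  rewrite (_ : (m == l :> nat) = false) ?mulr0 //; apply/negbTE.
  by rewrite eq_sym; rewrite -val_eqE in hl.
rewrite big1; first by rewrite nth_default // (leq_trans hs hm).
by move=> l _; rewrite (_ : (m == l :> nat) = false) ?mulr0 //; apply/negbTE; rewrite neq_ltn (leq_trans (ltn_ord l) hm) orbT.
Qed.

Section S.
Variable C : fieldType.

Lemma spowLam c i j : spow (sLam C) c i j = ((i + c)%N == j)%:R.
Proof.
elim: c i j => [|c IH] i j; first by rewrite /spow /= /sid; rewrite addn0.
rewrite /spow iterS -/(spow _ c) /smul (@fsum_single _ _ i.+1).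
  by rewrite /sLam eqxx mul1r IH addSnnS.
by move=> k hk; rewrite /sLam eq_sym (negbTE hk) mul0r.
Qed.

Lemma S1Lam (p1 : nat -> {poly C}) c i k :
  smul (S1_of p1) (spow (sLam C) c) i k = if (c <= k)%N then (p1 i)`_(k - c)%N else 0.
Proof.
rewrite /smul; case: leqP => hck.
  rewrite (@fsum_single _ _ (k - c)%N) /S1_of ?spowLam ?subnK ?eqxx ?mulr1 //.
  move=> l hl; rewrite spowLam (_ : ((l + c)%N == k) = false) ?mulr0 //.
  by apply/negbTE; apply: contra hl => /eqP <-; rewrite addnK.
rewrite fsbig1 // => l _; rewrite spowLam (_ : ((l + c)%N == k) = false) ?mulr0 //.
by apply/negbTE; rewrite neq_ltn (leq_trans hck) ?orbT // leq_addl.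
Qed.

Lemma sum_delta (V : lmodType C) N k (F : nat -> V) : (k < N)%N ->
  \sum_(l < N) (k == l)%:R *: F l = F k.
Proof.
move=> hk; rewrite (bigD1 (Ordinal hk)) //= eqxx scale1r big1 ?addr0 // => l hl.
rewrite (_ : (k == l :> nat) = false) ?scale0r //; apply/negbTE.
by rewrite eq_sym; rewrite -val_eqE in hl.
Qed.


Lemma claim1 c (p1 hp1 : nat -> {poly C}) (H : smx C) :
  (forall j, (size (p1 j) <= j.+1)%N) -> (forall j, (size (hp1 j) <= j.+1)%N) ->
  lower_tri H -> smul H (S1_of hp1) = sid C ->
  forall i, smulv (smul (smul (S1_of p1) (spow (sLam C) c)) H) hp1 i = 'X^c * p1 i.
Proof.
move=> sp1 shp1 lH HS i.
set N := (c + i.+1)%N.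
set M := smul (S1_of p1) (spow (sLam C) c).
have Mz k : (N <= k)%N -> M i k = 0.
  move=> hk; rewrite /M S1Lam; case: leqP => // hck; rewrite nth_default //.
  apply: (leq_trans (sp1 i)); rewrite /N in hk; lia.
have HS' k l : (k < N)%N -> \sum_(j < N) H k j * (hp1 j)`_l = (k == l)%:R.
  move=> hk; have := f_equal (fun f => f k l) HS; rewrite /smul /sid => <-.
  rewrite (@fsum_bound _ _ N) // => j hj; rewrite lH ?mul0r //; lia.
have Q k : (k < N)%N -> \sum_(j < N) H k j *: hp1 j = 'X^k.
  move=> hk.
  under eq_bigr => j _ do rewrite (@poly_expand _ (hp1 j) N (leq_trans (shp1 j) (ltn_ord j))) scaler_sumr.
  rewrite exchange_big /=.
  under eq_bigr => l _ do (under eq_bigr do rewrite scalerA; rewrite -scaler_suml HS' //).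
  by rewrite sum_delta.
have Mz2 j k : (N <= k)%N -> M i k * H k j = 0 by move=> hk; rewrite Mz // mul0r.
have Az j : (N <= j)%N -> smul M H i j *: hp1 j = 0.
  move=> hj; rewrite /smul (@fsum_bound _ _ N (Mz2 j)) big1 ?scale0r // => k _.
  by rewrite lH ?mulr0 //; apply: (leq_trans (ltn_ord k) hj).
rewrite /smulv (@fsum_bound _ _ N Az).
under eq_bigr => j _ do rewrite /smul (@fsum_bound _ _ N (Mz2 j)) scaler_suml.
rewrite exchange_big /=.
under eq_bigr => k _ do (under eq_bigr do rewrite -scalerA; rewrite -scaler_sumr Q //).
rewrite big_split_ord /= big1 ?add0r; last first.
  by move=> k _; rewrite /M S1Lam leqNgt ltn_ord scale0r.
under eq_bigr => l _ do rewrite /M S1Lam leq_addr addKn.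
rewrite [X in _ = _ * X](@poly_expand _ (p1 i) i.+1 (sp1 i)) mulr_sumr.
by apply: eq_bigr => l _; rewrite exprD scalerAr.
Qed.

Lemma claim2 c (p2 hp2 : nat -> {poly C}) (h hh : nat -> C) (S2 : smx C) :
  (forall j, (size (p2 j) <= j.+1)%N) -> (forall j, (size (hp2 j) <= j.+1)%N) ->
  upper_tri S2 -> smul (S2inv_of p2 h) S2 = sid C ->
  forall i, smulv (strT (smul (smul S2 (strT (spow (sLam C) c))) (S2inv_of hp2 hh)))
                  (fun j => (h j)^-1 *: p2 j) i
    = 'X^c * \sum_(k \in [set: nat]) (S2inv_of hp2 hh k i *: 'X^k).
Proof.
move=> sp2 shp2 uS2 HS i.
set G := S2inv_of p2 h; set K := S2inv_of hp2 hh; set N := (i.+1 + c)%N.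
set P := smul S2 (strT (spow (sLam C) c)).
have Kz k : (i < k)%N -> K k i = 0.
  by move=> hk; rewrite /K /S2inv_of nth_default ?mul0r // (leq_trans (shp2 i)).
have Pe j l : P j l = S2 j (l + c)%N.
  rewrite /P /smul (@fsum_single _ _ (l+c)%N) /strT /=.
rewrite (spowLam c l) eqxx mulr1 //.
  move=> m hm; rewrite spowLam (_ : ((l+c)%N == m) = false) ?mulr0 //.
  by apply/negbTE; rewrite eq_sym.
have Be j : smul P K j i = \sum_(k<N) S2 j (k+c)%N * K k i.
  rewrite /smul (@fsum_bound _ _ N); last first.
  by move=> k hk; rewrite (Kz k) ?mulr0 //; lia.
  by apply: eq_bigr => k _; rewrite Pe.
have Bz j : (N <= j)%N -> smul P K j i = 0.
  move=> hj; rewrite Be big1 // => k _; case: (leqP k i) => hk; last by rewrite (Kz k) ?mulr0.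
  by rewrite uS2 ?mul0r //; lia.
have ve j : (j < N)%N -> (h j)^-1 *: p2 j = \sum_(m<N) G m j *: 'X^m.
  move=> hj; rewrite {1}(@poly_expand _ (p2 j) N); last by apply: (leq_trans (sp2 j)).
  by rewrite scaler_sumr; apply: eq_bigr => m _; rewrite scalerA /G /S2inv_of mulrC.
have GS m l : (l < N)%N -> \sum_(j<N) G m j * S2 j l = (m == l)%:R.
  move=> hl; have := f_equal (fun f => f m l) HS; rewrite /smul /sid => <-.
  by rewrite (@fsum_bound _ _ N) // => j hj; rewrite uS2 ?mulr0 //; lia.
have inner m : \sum_(j<N) (\sum_(k<N) S2 j (k+c)%N * K k i) * G m j
     = \sum_(k<N) (((k+c)%N == m))%:R * K k i.
  under eq_bigr do rewrite mulr_suml.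
  rewrite exchange_big /=; apply: eq_bigr => k _.
  case: (leqP k i) => hk; last first.
    by rewrite (Kz k) // mulr0 big1 // => j _; rewrite mulr0 mul0r.
  rewrite eq_sym -GS; last by lia.
  by rewrite mulr_suml; apply: eq_bigr => j _; rewrite mulrAC (mulrC (S2 _ _)).
rewrite /smulv /strT /= (@fsum_bound _ _ N); last by move=> j hj; rewrite Bz ?scale0r.
rewrite [in RHS](@fsum_bound _ _ N); last by move=> k hk; rewrite (Kz k) ?scale0r //; lia.
under eq_bigr => j _ do rewrite ve // Be scaler_sumr.
rewrite exchange_big /=.
under eq_bigr => m _ do (under eq_bigr do rewrite scalerA; rewrite -scaler_suml inner scaler_suml).
rewrite exchange_big /=.
under eq_bigr => k _ do (under eq_bigr do rewrite -scalerA scalerA mulrC -scalerA; rewrite -scaler_sumr).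
rewrite [in RHS]mulr_sumr; apply: eq_bigr => k _; case: (leqP k i) => hk; last first.
  by rewrite (Kz k) ?scale0r ?mulr0.
rewrite sum_delta; last by lia.
by rewrite -scalerAr -exprD addnC.
Qed.

Lemma smul_id0 (M : smx C) : smul M (spow (sLam C) 0) = M.
Proof.
apply/funext => i; apply/funext => j; rewrite /smul (@fsum_single _ _ j).
  by rewrite /spow /= /sid eqxx mulr1.
by move=> k hk; rewrite /spow /= /sid (negbTE hk) mulr0.
Qed.

Lemma smul_idT0 (M : smx C) : smul M (strT (spow (sLam C) 0)) = M.
Proof.
apply/funext => i; apply/funext => j; rewrite /smul (@fsum_single _ _ j) /strT /=.
  by rewrite /spow /= /sid eqxx mulr1.
by move=> k hk; rewrite /spow /= /sid eq_sym (negbTE hk) mulr0.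
Qed.

End S.

Close Scope classical_set_scope.

Theorem corollary2p1 (R : realType) (a b : nat) (mu : smx R[i])
  (p1 p2 hp1 hp2 : nat -> {poly R[i]}) (h hh : nat -> R[i])
  (hS1inv S2 A B : smx R[i]) :
  (1 <= a)%N -> (1 <= b)%N ->
  (* periodicity of the moment matrix *)
  (forall i j, mu (i + a)%N (j + b)%N = mu i j) ->
  (* monic polynomials of degree j *)
  (forall j, monic_deg (p1 j) j) -> (forall j, monic_deg (p2 j) j) ->
  (forall j, monic_deg (hp1 j) j) -> (forall j, monic_deg (hp2 j) j) ->
  (* nonzero norms *)
  (forall j, h j != 0) -> (forall j, hh j != 0) ->
  (* bi-orthogonality w.r.t. mu and mu-hat, mu-hat_{ij} = mu_{i,j+b} *)
  (forall i j, bform mu (p1 i) (p2 j) = (i == j)%:R * h i) ->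
  (forall i j, bform (fun k l => mu k (l + b)%N) (hp1 i) (hp2 j)
                 = (i == j)%:R * hh i) ->
  (* hS1inv is the (lower triangular) inverse of S-hat_1 *)
  lower_tri hS1inv ->
  smul (S1_of hp1) hS1inv = sid _ -> smul hS1inv (S1_of hp1) = sid _ ->
  (* S2 is the (upper triangular) matrix whose inverse is S_2^{-1} *)
  upper_tri S2 ->
  smul S2 (S2inv_of p2 h) = sid _ -> smul (S2inv_of p2 h) S2 = sid _ ->
  (* A := S1 Lambda^a S-hat_1^{-1} = S2 S-hat_2^{-1} *)
  A = smul (smul (S1_of p1) (spow (sLam _) a)) hS1inv ->
  A = smul S2 (S2inv_of hp2 hh) ->
  (* B := S1 S-hat_1^{-1} = S2 Lambda^{-b} S-hat_2^{-1} *)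
  B = smul (S1_of p1) hS1inv ->
  B = smul (smul S2 (strT (spow (sLam _) b))) (S2inv_of hp2 hh) ->
  (forall i, smulv A hp1 i = 'X^a * smulv B hp1 i) /\
  (forall i, smulv (strT B) (fun j => (h j)^-1 *: p2 j) i
             = 'X^b * smulv (strT A) (fun j => (h j)^-1 *: p2 j) i).
Proof.
move=> _ _ _ m1 m2 hm1 hm2 _ _ _ _ lH _ HS1 uS2 _ HS2 A1 A2 B1 B2.
have s1 j : (size (p1 j) <= j.+1)%N by case: (m1 j) => _ ->.
have s2 j : (size (p2 j) <= j.+1)%N by case: (m2 j) => _ ->.
have hs1 j : (size (hp1 j) <= j.+1)%N by case: (hm1 j) => _ ->.
have hs2 j : (size (hp2 j) <= j.+1)%N by case: (hm2 j) => _ ->.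
split => i.
  rewrite A1 B1 -{2}(@smul_id0 _ (S1_of p1)) !claim1 //.
  by rewrite expr0 mul1r.
rewrite B2 A2 -{2}(@smul_idT0 _ S2) !claim2 //.
by rewrite expr0 mul1r.
Qed.
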